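(* There exist maps $A,B:\{0,1\}^n\to(\{a,b\}\cup\{\epsilon\})^{t}$ with $t=O(n)$, say $A(x)=(\alpha_1,\dots,\alpha_t)$ and $B(y)=(\beta_1,\dots,\beta_t)$, such that for every $(x,y)$ in the domain $D_n$ of $PIP_2$, the word $\alpha_1\beta_1\alpha_2\beta_2\cdots\alpha_t\beta_t$ belongs to $L_5$ if and only if $PIP_2(x,y)=1$. Consequently $N^1(L_5)(O(n))\ge N^1(PIP_2)(n)$, i.e. any lower bound $N^1(PIP_2)=\Omega(n)$ would give $N^1(L_5)=\Omega(n)$.
   Context: $L_5$ is the language recognized by the deterministic automaton with states $1,2,3,4,5$, initial state $1$, accepting set $\{5\}$, and transitions $\delta(1,a)=\delta(1,b)=2$, $\delta(2,a)=5$, $\delta(2,b)=3$, $\delta(3,a)=4$, $\delta(3,b)=5$, $\delta(4,a)=3$, $\delta(4,b)=1$, $\delta(5,a)=\delta(5,b)=5$. $\epsilon$ denotes the empty word. $PIP_2$ is the promise function with domain $D_n\subseteq\{0,1\}^n\times\{0,1\}^n$ consisting of all $(x,y)$ with $\sum_{i}x_iy_i$ odd, together with all $(x,y)$ with $\sum_ix_iy_i$ even such that for every $i$: if $x_i=0,y_i=1$ then $\sum_{j<i}x_jy_j$ is even, and if $x_i=1,y_i=0$ then $\sum_{j<i}x_jy_j$ is odd; on $D_n$, $PIP_2(x,y)=1$ iff $\sum_ix_iy_i$ is odd. Alice holds $x$, Bob holds $y$. $N^1$ denotes non-deterministic communication complexity (for a promise function, covering of the 1-inputs by rectangles containing no 0-input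 of the domain); for $L_5$, $N^1(L_5)(n)$ is that of the problem where Alice receives $a_1,a_3,\dots,a_{2n-1}$, Bob receives $a_2,\dots,a_{2n}$, each in $\{a,b,\epsilon\}$, deciding whether $a_1\cdots a_{2n}\in L_5$. *)

(* Defs.v *)
From mathcomp Require Import all_boot.
Set Implicit Arguments. Unset Strict Implicit. Unset Printing Implicit Defensive.

(* Letters: a is encoded as false, b as true.
   Symbols in {a, b, epsilon}: Some false = a, Some true = b, None = epsilon. *)
Definition letter_a : bool := false.
Definition letter_b : bool := true.
Definition sym := option bool.

Definition delta5 (q : nat) (c : bool) : nat :=
  match q, c with
  | 1, _ => 2
  | 2, false => 5
  | 2, true => 3
  | 3, false => 4
  | 3, true => 5
  | 4, false => 3
  | 4, true => 1
  | _, _ => 5   (* state 5 (the only other reachable state) loops *)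
  end.

Definition inL5 (w : seq bool) : bool := foldl delta5 1 w == 5.

(* The word alpha_1 beta_1 ... alpha_t beta_t, with epsilons erased. *)
Definition interleave t (al be : t.-tuple sym) : seq bool :=
  pmap id (flatten [seq [:: p.1; p.2] | p <- zip al be]).

Definition pref n (x y : n.-tuple bool) (i : nat) : nat :=
  \sum_(j < n | j < i) (tnth x j && tnth y j).

Definition PIP2_dom n (x y : n.-tuple bool) : bool :=
  odd (pref x y n) ||
  [forall i : 'I_n,
     ((~~ tnth x i && tnth y i) ==> ~~ odd (pref x y i)) &&
     ((tnth x i && ~~ tnth y i) ==> odd (pref x y i))].

Definition PIP2 n (x y : n.-tuple bool) : bool := odd (pref x y n).

Definition has_cover (X Y : finType) (D f : X -> Y -> bool) (k : nat) : bool :=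
  [exists R : {ffun 'I_k -> {set X} * {set Y}},
     [forall i, forall x, forall y,
        [&& x \in (R i).1, y \in (R i).2 & D x y] ==> f x y] &&
     [forall x, forall y,
        (D x y && f x y) ==> [exists i, (x \in (R i).1) && (y \in (R i).2)]]].

(* minimum cover size (a cover of size #|X|*#|Y| by singletons always exists) *)
Definition cover_number (X Y : finType) (D f : X -> Y -> bool) : nat :=
  find (has_cover D f) (iota 0 (#|X| * #|Y|).+1).

Definition N1 (X Y : finType) (D f : X -> Y -> bool) : nat :=
  up_log 2 (cover_number D f).

Definition N1_PIP2 (n : nat) : nat :=
  N1 (@PIP2_dom n) (@PIP2 n).

(* L_5 with parameter m: Alice gets a_1,a_3,...,a_{2m-1}, Bob gets
   a_2,...,a_{2m}; total function (domain = everything). *)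
Definition N1_L5 (m : nat) : nat :=
  N1 (fun _ _ : m.-tuple sym => true)
     (fun al be : m.-tuple sym => inL5 (interleave al be)).

(* Main.v *)
Require Import Defs.
From mathcomp Require Import all_boot.

Lemma cover_transfer (X Y X' Y' : finType) (D f : X -> Y -> bool)
  (f' : X' -> Y' -> bool) (A : X -> X') (B : Y -> Y') k :
  (forall x y, D x y -> f' (A x) (B y) = f x y) ->
  has_cover (fun _ _ => true) f' k -> has_cover D f k.
Proof.
move=> HAB /existsP [R /andP [/forallP H1 /forallP H2]].
apply/existsP; exists [ffun i => ([set x | A x \in (R i).1], [set y | B y \in (R i).2])].
apply/andP; split.
- apply/forallP=> i; apply/forallP=> x; apply/forallP=> y; apply/implyP.
  rewrite ffunE /= !inE => /and3P [hx hy hd].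
  rewrite -(HAB _ _ hd).
  by move: (H1 i) => /forallP /(_ (A x)) /forallP /(_ (B y)) /implyP; apply; rewrite hx hy.
- apply/forallP=> x; apply/forallP=> y; apply/implyP => /andP [hd hf].
  move: (H2 (A x)) => /forallP /(_ (B y)) /implyP.
  rewrite HAB // hf => /(_ isT) /existsP [i /andP [hx hy]].
  by apply/existsP; exists i; rewrite ffunE !inE hx hy.
Qed.

Lemma cover_number_le (X Y : finType) (D f : X -> Y -> bool) k :
  has_cover D f k -> cover_number D f <= k.
Proof.
move=> H; rewrite /cover_number.
case: (ltnP k (#|X| * #|Y|).+1) => hk.
  rewrite leqNgt; apply/negP => /(before_find 0).
  by rewrite nth_iota // add0n H.
apply: leq_trans (find_size _ _) _; by rewrite size_iota.
Qed.

Lemma cover_number_cases (X Y : finType) (D f : X -> Y -> bool) :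
  has_cover D f (cover_number D f) \/ cover_number D f = (#|X| * #|Y|).+1.
Proof.
rewrite /cover_number.
case: (boolP (has (has_cover D f) (iota 0 (#|X| * #|Y|).+1))) => h.
  left. have := nth_find 0 h. have hl := h. rewrite has_find size_iota in hl.
  by rewrite nth_iota ?add0n.
right. by rewrite (hasNfind h) size_iota.
Qed.

Lemma N1_reduce (X Y X' Y' : finType) (D f : X -> Y -> bool)
  (f' : X' -> Y' -> bool) (A : X -> X') (B : Y -> Y') :
  (forall x y, D x y -> f' (A x) (B y) = f x y) ->
  #|X| * #|Y| <= #|X'| * #|Y'| ->
  N1 D f <= N1 (fun _ _ => true) f'.
Proof.
move=> HAB Hc; rewrite /N1; apply: leq_up_log.
case: (@cover_number_cases X' Y' (fun _ _ => true) f') => [h|->].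
  exact: (@cover_number_le _ _ _ _ _ (@cover_transfer X Y X' Y' D f f' A B _ HAB h)).
apply: leq_trans (find_size _ _) _; by rewrite size_iota ltnS.
Qed.
Set Implicit Arguments. Unset Strict Implicit.

Definition ga (b : bool) : seq sym :=
  if b then [:: None; Some true; None] else [:: Some false; None; None].
Definition gb (b : bool) : seq sym :=
  if b then [:: Some false; None; None] else [:: Some true; Some false; Some true].
Definition il (s t : seq sym) : seq bool :=
  pmap id (flatten [seq [:: p.1; p.2] | p <- zip s t]).
Definition step (q : nat) (xi yi : bool) : nat := foldl delta5 q (il (ga xi) (gb yi)).
Definition stepp q (p : bool * bool) := step q p.1 p.2.

Lemma il_cat s1 s2 t1 t2 : size s1 = size t1 ->
  il (s1 ++ s2) (t1 ++ t2) = il s1 t1 ++ il s2 t2.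
Proof. by move=> h; rewrite /il zip_cat // map_cat flatten_cat pmap_cat. Qed.

Lemma size_fga xs : size (flatten (map ga xs)) = 3 * size xs.
Proof. elim: xs => //= b xs IH; rewrite size_cat IH mulnS; by case: b. Qed.
Lemma size_fgb xs : size (flatten (map gb xs)) = 3 * size xs.
Proof. elim: xs => //= b xs IH; rewrite size_cat IH mulnS; by case: b. Qed.

Lemma il_flat xs ys : size xs = size ys ->
  il (flatten (map ga xs)) (flatten (map gb ys)) =
  flatten [seq il (ga p.1) (gb p.2) | p <- zip xs ys].
Proof.
elim: xs ys => [|a xs IH] [|b ys] //= [h].
rewrite il_cat; last by case: a; case: b.
by rewrite IH.
Qed.

Lemma fold_flat q z :
  foldl delta5 q (flatten [seq il (ga p.1) (gb p.2) | p <- z]) = foldl stepp q z.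
Proof. elim: z q => //= p z IH q; by rewrite foldl_cat IH. Qed.

Definition okb n (x y : n.-tuple bool) (i : 'I_n) : bool :=
  ((~~ tnth x i && tnth y i) ==> ~~ odd (pref x y i)) &&
  ((tnth x i && ~~ tnth y i) ==> odd (pref x y i)).

Lemma prefS n (x y : n.-tuple bool) i (hi : i < n) :
  pref x y i.+1 = pref x y i + (tnth x (Ordinal hi) && tnth y (Ordinal hi)).
Proof.
rewrite /pref (bigD1 (Ordinal hi)) /=; last by rewrite ltnSn.
rewrite addnC; congr (_ + _); apply: eq_bigl => j.
rewrite -val_eqE /= ltnS leq_eqVlt; by case: (ltngtP j i).
Qed.

Lemma pref0 n (x y : n.-tuple bool) : pref x y 0 = 0.
Proof. by rewrite /pref big_pred0. Qed.

Lemma inv n (x y : n.-tuple bool) i : i <= n ->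
  foldl stepp 3 (take i (zip x y)) =
  if [forall j : 'I_n, (j < i) ==> okb x y j]
  then (if odd (pref x y i) then 1 else 3) else 5.
Proof.
elim: i => [|i IH] hi.
  rewrite take0 pref0 /=.
  by have -> : [forall j : 'I_n, (j < 0) ==> okb x y j] by apply/forallP.
have hin : i < n by [].
have hz : size (zip x y) = n by rewrite size_zip !size_tuple minnn.
rewrite (take_nth (false, false)); last by rewrite hz.
rewrite foldl_rcons IH; last exact: ltnW.
rewrite nth_zip; last by rewrite !size_tuple.
rewrite /stepp.
rewrite (prefS x y hin) -!(tnth_nth false x (Ordinal hin)) -!(tnth_nth false y (Ordinal hin)).
have -> : [forall j : 'I_n, (j < i.+1) ==> okb x y j] =
          [forall j : 'I_n, (j < i) ==> okb x y j] && okb x y (Ordinal hin).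
  apply/forallP/andP.
    move=> H; split.
      by apply/forallP=> j; apply/implyP=> hj; apply: (implyP (H j)); apply: ltnW.
    by apply: (implyP (H (Ordinal hin))) => /=.
  case=> /forallP H1 H2 j; apply/implyP; rewrite ltnS leq_eqVlt; case/orP.
    by move=> /eqP hj; have -> : j = Ordinal hin by apply: val_inj.
  by move=> hj; apply: (implyP (H1 j)).
rewrite /okb /= oddD.
case: [forall j : 'I_n, (j < i) ==> okb x y j];
 case: (tnth x (Ordinal hin)); case: (tnth y (Ordinal hin));
   case: (odd (pref x y i)); reflexivity.
Qed.
Definition sA (xs : seq bool) : seq sym := [:: Some false] ++ flatten (map ga xs) ++ [:: Some false].
Definition sB (ys : seq bool) : seq sym := [:: Some true] ++ flatten (map gb ys) ++ [:: Some false].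

Lemma correct n (x y : n.-tuple bool) : PIP2_dom x y ->
  inL5 (il (sA x) (sB y)) = PIP2 x y.
Proof.
move=> hd.
rewrite /sA /sB il_cat // il_cat; last by rewrite size_fga size_fgb !size_tuple.
rewrite il_flat ?size_tuple // /inL5 foldl_cat /= foldl_cat fold_flat.
have hz : size (zip x y) = n by rewrite size_zip !size_tuple minnn.
have := @inv n x y n (leqnn n); rewrite -{1}hz take_size => ->.
have -> : [forall j : 'I_n, (j < n) ==> okb x y j] = [forall j, okb x y j].
  by apply: eq_forallb => j; rewrite ltn_ord.
move: hd; rewrite /PIP2_dom /PIP2.
change [forall i, okb x y i] with [forall j, okb x y j].
case: [forall j, okb x y j]; first by case: (odd (pref x y n)).
by case: (odd (pref x y n)).
Qed.

Theorem mainTheorem17 :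
  exists c : nat, forall n : nat, exists t : nat,
    t <= c * n.+1 /\
    exists (A : n.-tuple bool -> t.-tuple sym) (B : n.-tuple bool -> t.-tuple sym),
      (forall x y : n.-tuple bool, PIP2_dom x y ->
          inL5 (interleave (A x) (B y)) = PIP2 x y) /\
      N1_PIP2 n <= N1_L5 t.
Proof.
exists 5 => n; exists (3 * n + 2); split.
  by rewrite mulnS addnC leq_add // leq_mul2r orbT.
pose A := fun x : n.-tuple bool => insubd (nseq_tuple (3 * n + 2) (None : sym)) (sA x).
pose B := fun y : n.-tuple bool => insubd (nseq_tuple (3 * n + 2) (None : sym)) (sB y).
have hA x : val (A x) = sA x.
  by rewrite val_insubd ifT //= /sA !size_cat size_fga size_tuple /= addn1 addn2.
have hB y : val (B y) = sB y.
  by rewrite val_insubd ifT //= /sB !size_cat size_fgb size_tuple /= addn1 addn2.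
have HAB : forall x y : n.-tuple bool, PIP2_dom x y ->
    inL5 (interleave (A x) (B y)) = PIP2 x y.
  move=> x y hd; rewrite /interleave -/(il (val (A x)) (val (B y))) hA hB.
  exact: correct.
exists A, B; split => //.
rewrite /N1_PIP2 /N1_L5.
apply: (@N1_reduce _ _ _ _ _ _ (fun al be : (3 * n + 2).-tuple sym => inL5 (interleave al be)) A B HAB).
rewrite !card_tuple card_option card_bool.
have h : 2 ^ n <= 3 ^ (3 * n + 2).
  apply: (@leq_trans (2 ^ (3 * n + 2))).
    by apply: leq_pexp2l => //; rewrite mulSn -addnA leq_addr.
  by rewrite leq_exp2r // addn2.
exact: leq_mul.
Qed.
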